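(* Let $k\ge 2$ and $s\ge 0$ be integers, and let $a_{n,m}$ be the number of ways to place $s$ pairwise non-overlapping $k$-mers on the $n\times m$ rectangular lattice with open boundary conditions in both directions. Then for $n\ge (k+1)s+1$ and $m\ge (k+1)s+1$, $$\sum_{i=0}^{2s+1}(-1)^i\binom{2s+1}{i}a_{n-i,m-i}=0.$$
   Context: The lattice is $\{1,\dots,n\}\times\{1,\dots,m\}$ with open boundaries. A $k$-mer occupies $k$ consecutive sites in one row or one column; a configuration is a set of $s$ $k$-mers with pairwise disjoint site sets. *)

(* Defs.v *)
From mathcomp Require Import all_boot all_order all_algebra.
Set Implicit Arguments. Unset Strict Implicit. Unset Printing Implicit Defensive.

Definition site (n m : nat) := ('I_n * 'I_m)%type.

Definition is_kmer (k n m : nat) (A : {set site n m}) : bool :=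
  [exists r : 'I_n, exists c : 'I_m,
     (c + k <= m) && (A == [set p : site n m | (p.1 == r) && (c <= p.2 < c + k)])]
  ||
  [exists r : 'I_n, exists c : 'I_m,
     (r + k <= n) && (A == [set p : site n m | (p.2 == c) && (r <= p.1 < r + k)])].

Definition is_config (k s n m : nat) (P : {set {set site n m}}) : bool :=
  [&& [forall A in P, is_kmer k A],
      #|P| == s &
      [forall A in P, forall B in P, (A != B) ==> [disjoint A & B]]].

Definition num_configs (k s n m : nat) : nat :=
  #|[set P : {set {set site n m}} | is_config k s P]|.

(* Main.v *)
Require Import Defs.
From mathcomp Require Import all_boot all_order all_algebra zify.
Import GRing.Theory Num.Theory.
Definition Dg (j : nat) (g : nat -> int) : int :=
  (\sum_(i < j.+1) (-1) ^+ i * ('C(j, i))%:Z * g i)%R.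
Lemma DgB j g1 g2 : Dg j (fun i => g1 i - g2 i)%R = (Dg j g1 - Dg j g2)%R.
Proof.
rewrite /Dg -sumrB; apply: eq_bigr => i _; by rewrite GRing.mulrBr.
Qed.
Lemma DgS j g : Dg j.+1 g = Dg j (fun i => g i - g i.+1)%R.
Proof.
rewrite DgB /Dg big_ord_recl /= [in RHS]big_ord_recl /= !bin0.
have -> : (\sum_(i < j.+1) (-1) ^+ (bump 0 i) * ('C(j.+1, bump 0 i))%:Z * g (bump 0 i)
   = \sum_(i < j.+1) (-1) ^+ i.+1 * ('C(j, i.+1))%:Z * g i.+1
     + \sum_(i < j.+1) (-1) ^+ i.+1 * ('C(j, i))%:Z * g i.+1)%R.
  rewrite -big_split; apply: eq_bigr => i _ /=.
  by rewrite /bump /= add1n binS PoszD GRing.mulrDr GRing.mulrDl.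
rewrite (big_ord_recr j (fun i : 'I_j.+1 => (-1) ^+ i.+1 * ('C(j, i.+1))%:Z * g i.+1)%R) /=.
rewrite bin_small // GRing.mulr0 GRing.mul0r GRing.addr0.
have -> : (\sum_(i < j.+1) (-1) ^+ i.+1 * ('C(j, i))%:Z * g i.+1 =
   - \sum_(i < j.+1) (-1) ^+ i * ('C(j, i))%:Z * g i.+1)%R.
  rewrite -GRing.sumrN; apply: eq_bigr => i _; by rewrite GRing.exprS !GRing.mulN1r !GRing.mulNr.
by rewrite GRing.addrA; congr (_ + _ + _)%R.
Qed.

Lemma Dg_ext j g1 g2 : (forall i, i <= j -> g1 i = g2 i) -> Dg j g1 = Dg j g2.
Proof.
move=> H; rewrite /Dg; apply: eq_bigr => i _; rewrite H //; exact: (ltn_ord i).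
Qed.

Lemma Dg_zero j g : (forall i, i <= j -> g i = 0%R) -> Dg j g = 0%R.
Proof.
move=> H; rewrite /Dg big1 // => i _; rewrite H ?GRing.mulr0 //; exact: (ltn_ord i).
Qed.

Lemma DgD j g1 g2 : Dg j (fun i => g1 i + g2 i)%R = (Dg j g1 + Dg j g2)%R.
Proof. by rewrite /Dg -big_split; apply: eq_bigr => i _; rewrite GRing.mulrDr. Qed.

Lemma Dg_sum (T : finType) (P : pred T) j (g : T -> nat -> int) :
  Dg j (fun i => \sum_(x | P x) g x i)%R = (\sum_(x | P x) Dg j (g x))%R.
Proof.
rewrite /Dg exchange_big /=; apply: eq_bigr => i _; by rewrite GRing.mulr_sumr.
Qed.

Lemma DgS_shift j (f : nat -> int) y :
  Dg j.+1 (fun i => f (y - i)%N) = (Dg j (fun i => f (y - i)%N) - Dg j (fun i => f (y.-1 - i)%N))%R.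
Proof.
rewrite DgS DgB; congr (_ - _)%R; apply: Dg_ext => i _.
by have -> : (y - i.+1 = y.-1 - i)%N by lia.
Qed.

Lemma Dg_lift (f : nat -> int) j a :
  (forall y, a <= y -> Dg j (fun i => f (y - i)) = 0%R) ->
  forall t y, a + t <= y -> Dg (j + t) (fun i => f (y - i)) = 0%R.
Proof.
move=> H; elim=> [|t IH] y hy; first by rewrite addn0; apply: H; lia.
rewrite addnS DgS_shift !IH ?GRing.subrr //; lia.
Qed.

Lemma diagZ a : forall b (f : nat -> nat -> int) A,
 (forall m' n', A + a <= n' -> Dg a (fun i => f (n' - i) m') = 0%R) ->
 (forall n' m', A + b <= m' -> Dg b (fun i => f n' (m' - i)) = 0%R) ->
 forall n m, A + (a + b).-1 <= n -> A + (a + b).-1 <= m ->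
   Dg (a + b).-1 (fun i => f (n - i) (m - i)) = 0%R.
Proof.
elim: a => [|a IHa].
  move=> b f A H1 _ n m hn hm; apply: Dg_zero => i hi.
  have := H1 (m - i) (n - i); rewrite /Dg big_ord1 /= bin0 GRing.expr0 !GRing.mul1r subn0.
  apply; lia.
elim=> [|b IHb].
  move=> f A _ H2 n m hn hm; apply: Dg_zero => i hi.
  have := H2 (n - i) (m - i); rewrite /Dg big_ord1 /= bin0 GRing.expr0 !GRing.mul1r subn0.
  apply; rewrite addn0 /= in hi hm; lia.
move=> f A H1 H2 n m hn hm.
have -> : (a.+1 + b.+1).-1 = (a + b).+1 by lia.
rewrite DgS.
pose h1 := fun x y => (f x y - f x.-1 y)%R.
pose h2 := fun x y => (f x.-1 y - f x.-1 y.-1)%R.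
rewrite (Dg_ext _ _ (fun i => h1 (n - i)%N (m - i)%N + h2 (n - i)%N (m - i)%N)%R); last first.
  move=> i _; rewrite /h1 /h2.
  have -> : (n - i.+1 = (n - i).-1)%N by lia.
  have -> : (m - i.+1 = (m - i).-1)%N by lia.
  by rewrite GRing.addrA GRing.subrK.
rewrite DgD.
have E1 := IHa b.+1 h1 A.+1.
have E2 := IHb h2 A.+1.
rewrite (_ : (a + b.+1).-1 = a + b) in E1; last by lia.
rewrite (_ : (a.+1 + b).-1 = a + b) in E2; last by lia.
rewrite E1 ?E2 ?GRing.addr0 //; try lia.
- move=> m' n' hn'; rewrite /h2 DgB.
  rewrite (Dg_ext _ _ (fun i => f (n'.-1 - i)%N m')); last by move=> i _; congr f; lia.
  rewrite (Dg_ext _ (fun i => f (n' - i)%N.-1 m'.-1) (fun i => f (n'.-1 - i)%N m'.-1)); last by move=> i _; congr f; lia.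
  rewrite !H1 ?GRing.subrr //; lia.
- move=> n' m' hm'; rewrite /h2.
  rewrite (Dg_ext _ _ (fun i => f n'.-1 (m' - i)%N - f n'.-1 (m' - i.+1)%N)%R); last first.
    by move=> i _; congr (_ - _)%R; congr f; lia.
  rewrite -DgS; apply: H2; lia.
- move=> m' n' hn'; rewrite /h1.
  rewrite (Dg_ext _ _ (fun i => f (n' - i)%N m' - f (n' - i.+1)%N m')%R); last first.
    by move=> i _; congr (_ - _)%R; congr f; lia.
  rewrite -DgS; apply: H1; lia.
- move=> n' m' hm'; rewrite /h1 DgB !H2 ?GRing.subrr //; lia.
Qed.
Set Implicit Arguments. Unset Strict Implicit. Unset Printing Implicit Defensive.

Lemma forall_in_and (T : finType) (D : {pred T}) (A B : pred T) :
  [forall x in D, A x && B x] = [forall x in D, A x] && [forall x in D, B x].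
Proof.
apply/idP/idP.
  move/forallP=> H; apply/andP; split; apply/forallP=> x; apply/implyP=> hx;
  by have /implyP/(_ hx)/andP[] := H x.
case/andP=> /forallP H1 /forallP H2; apply/forallP=> x; apply/implyP=> hx.
by rewrite (implyP (H1 x) hx) (implyP (H2 x) hx).
Qed.

Section Kmers.
Variables k m : nat.

Definition cellp (o : bool) (r c j : nat) : nat * nat :=
  if o then (r, c + j) else (r + j, c).
Definition fitp n (o : bool) (r c : nat) : bool :=
  if o then c + k <= m else r + k <= n.
Definition ovl o1 r1 c1 o2 r2 c2 : bool :=
  [exists j1 : 'I_k, exists j2 : 'I_k, cellp o1 r1 c1 j1 == cellp o2 r2 c2 j2].
Definition hits (pi : nat -> nat -> bool) o r c : bool :=
  [exists j : 'I_k, pi (cellp o r c j).1 (cellp o r c j).2].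

Definition Pl n := (bool * 'I_n * 'I_m)%type.
Definition okp n pi (p : Pl n) := fitp n p.1.1 p.1.2 p.2 && ~~ hits pi p.1.1 p.1.2 p.2.
Definition ovp n (p q : Pl n) := ovl p.1.1 p.1.2 p.2 q.1.1 q.1.2 q.2.
Definition good n s pi (P : {set Pl n}) : bool :=
  [&& #|P| == s, [forall p in P, okp pi p] &
      [forall p in P, forall q in P, (p != q) ==> ~~ ovp p q]].
Definition F n s pi : nat := \sum_(P : {set Pl n} | good s pi P) 1.

Definition okX pi (x : bool * 'I_m) :=
  (x.1 ==> (x.2 + k <= m)) && ~~ hits pi x.1 0 x.2.
Definition condX pi (X : {set bool * 'I_m}) :=
  [forall x in X, okX pi x] &&
  [forall x in X, forall y in X, (x != y) ==> ~~ ovl x.1 0 x.2 y.1 0 y.2].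
Definition piX (pi : nat -> nat -> bool) (X : {set bool * 'I_m}) a b :=
  pi a.+1 b || [exists x in X, [exists j : 'I_k, cellp x.1 0 x.2 j == (a.+1, b)]].

Lemma cellpS o r c j : cellp o r.+1 c j = ((cellp o r c j).1.+1, (cellp o r c j).2).
Proof. by case: o => //=; rewrite addSn. Qed.

Lemma ovlS o1 r1 c1 o2 r2 c2 : ovl o1 r1.+1 c1 o2 r2.+1 c2 = ovl o1 r1 c1 o2 r2 c2.
Proof.
rewrite /ovl; apply: eq_existsb => j1; apply: eq_existsb => j2.
by rewrite !cellpS !xpair_eqE eqSS.
Qed.

Lemma ovlC o1 r1 c1 o2 r2 c2 : ovl o1 r1 c1 o2 r2 c2 = ovl o2 r2 c2 o1 r1 c1.
Proof.
apply/existsP/existsP => -[j1 /existsP [j2 /eqP E]]; exists j2; apply/existsP; exists j1; by rewrite E.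
Qed.

Lemma hits_piX pi X o r c :
  hits (piX pi X) o r c = hits pi o r.+1 c || [exists x in X, ovl o r.+1 c x.1 0 x.2].
Proof.
rewrite /hits /piX.
apply/existsP/orP.
- case=> j /orP [H|/existsP [x /andP [hx /existsP [j' /eqP E]]]].
    by left; apply/existsP; exists j; rewrite cellpS.
  right; apply/existsP; exists x; rewrite hx /=; apply/existsP; exists j; apply/existsP; exists j'.
  by rewrite cellpS -E.
- case=> [/existsP [j H]|/existsP [x /andP [hx /existsP [j /existsP [j' /eqP E]]]]].
    by exists j; rewrite cellpS in H; rewrite H.
  exists j; apply/orP; right; apply/existsP; exists x; rewrite hx /=; apply/existsP; exists j'.
  by rewrite -E cellpS; case: (cellp o r c j).
Qed.

Section Step.
Variable n : nat.
Definition liftp (p : Pl n) : Pl n.+1 := (p.1.1, lift ord0 p.1.2, p.2).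
Definition place0 (x : bool * 'I_m) : Pl n.+1 := (x.1, ord0, x.2).
Definition Phi (XP : {set bool * 'I_m} * {set Pl n}) : {set Pl n.+1} :=
  (place0 @: XP.1) :|: (liftp @: XP.2).
Definition Psi (P : {set Pl n.+1}) : {set bool * 'I_m} * {set Pl n} :=
  ([set x | place0 x \in P], [set p | liftp p \in P]).

Lemma liftp_inj : injective liftp.
Proof.
move=> [[o r] c] [[o' r'] c'] [-> E ->]; by rewrite (val_inj (addnI E)).
Qed.
Lemma place0_inj : injective place0.
Proof. by move=> [o c] [o' c'] [-> ->]. Qed.
Lemma place0_liftp x p : (place0 x == liftp p) = false.
Proof. by apply/negbTE/eqP => /(congr1 (fun z : Pl n.+1 => val z.1.2)). Qed.

Lemma mem_Phi_place0 X P x : (place0 x \in Phi (X, P)) = (x \in X).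
Proof.
rewrite /Phi inE (mem_imset _ _ place0_inj).
case: imsetP => [[p _ E]|_]; last by rewrite orbF.
by move: (place0_liftp x p); rewrite E eqxx.
Qed.
Lemma mem_Phi_liftp X P p : (liftp p \in Phi (X, P)) = (p \in P).
Proof.
rewrite /Phi inE (mem_imset _ _ liftp_inj).
case: imsetP => [[x _ E]|_] //.
Qed.

Lemma Phi_bij : bijective Phi.
Proof.
exists Psi.
  move=> [X P]; rewrite /Psi; congr pair; apply/setP => z; rewrite inE.
    exact: mem_Phi_place0.
  exact: mem_Phi_liftp.
move=> P; apply/setP => z; rewrite /Phi /Psi /= inE.
case: z => [[o r] c].
case: (unliftP ord0 r) => [j ->|->].
- rewrite (_ : (o, lift ord0 j, c) = liftp (o, j, c)) // (mem_imset _ _ liftp_inj) inE.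
  case: imsetP => [[x _ E]|_] //.
- rewrite (_ : (o, ord0, c) = place0 (o, c)) // (mem_imset _ _ place0_inj) inE.
  case: imsetP => [[p _ E]|_]; last by rewrite orbF.
  by move: (place0_liftp (o, c) p); rewrite E eqxx.
Qed.

Lemma forall_Phi X P (Q : pred (Pl n.+1)) :
  [forall z in Phi (X, P), Q z] =
  [forall x in X, Q (place0 x)] && [forall p in P, Q (liftp p)].
Proof.
apply/idP/andP.
  move/forallP=> H; split; apply/forallP => y; apply/implyP => hy.
    by apply: (implyP (H _)); rewrite mem_Phi_place0.
  by apply: (implyP (H _)); rewrite mem_Phi_liftp.
case=> /forallP H1 /forallP H2; apply/forallP => z; apply/implyP.
rewrite /Phi inE => /orP [/imsetP [x hx ->]|/imsetP [p hp ->]].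
  exact: (implyP (H1 x)).
exact: (implyP (H2 p)).
Qed.

Lemma card_Phi X P : #|Phi (X, P)| = #|X| + #|P|.
Proof.
rewrite /Phi cardsU !card_imset //; try exact: place0_inj; try exact: liftp_inj.
suff -> : (place0 @: X :&: liftp @: P) = set0 by rewrite cards0 subn0.
apply/setP => z; rewrite !inE; apply/negP => /andP [/imsetP [x _ ->] /imsetP [p _ E]].
by move: (place0_liftp x p); rewrite E eqxx.
Qed.


Lemma ok_place0 pi x : k <= n.+1 -> okp pi (place0 x) = okX pi x.
Proof. by move=> hk; rewrite /okp /okX /fitp /=; case: x.1 => //=; rewrite add0n hk. Qed.

Lemma ok_liftp pi p :
  okp pi (liftp p) = fitp n p.1.1 p.1.2 p.2 && ~~ hits pi p.1.1 (p.1.2).+1 p.2.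
Proof. by rewrite /okp /fitp /=; case: p.1.1 => //; rewrite addSn ltnS. Qed.

Lemma ok_Phi pi X P : k <= n.+1 ->
  [forall z in Phi (X, P), okp pi z] =
  [forall x in X, okX pi x] &&
  [forall p in P, fitp n p.1.1 p.1.2 p.2 && ~~ hits pi p.1.1 (p.1.2).+1 p.2].
Proof.
move=> hk; rewrite forall_Phi; congr andb; apply: eq_forallb => z; by rewrite ?ok_place0 ?ok_liftp.
Qed.

Lemma pair_Phi X P :
  [forall z in Phi (X, P), forall w in Phi (X, P), (z != w) ==> ~~ ovp z w] =
  [&& [forall x in X, forall y in X, (x != y) ==> ~~ ovl x.1 0 x.2 y.1 0 y.2],
      [forall p in P, ~~ [exists x in X, ovl p.1.1 (p.1.2).+1 p.2 x.1 0 x.2]] &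
      [forall p in P, forall q in P, (p != q) ==> ~~ ovp p q]].
Proof.
have Ell : forall p q : Pl n, ovp (liftp p) (liftp q) = ovp p q.
  by move=> p q; rewrite /ovp /= ovlS.
have Elp : forall p x, ovp (liftp p) (place0 x) = ovl p.1.1 (p.1.2).+1 p.2 x.1 0 x.2.
  by move=> p x; rewrite /ovp /=.
have Epl : forall p x, ovp (place0 x) (liftp p) = ovl p.1.1 (p.1.2).+1 p.2 x.1 0 x.2.
  by move=> p x; rewrite /ovp /= ovlC.
apply/idP/idP.
- move=> /forallP H.
  have H' : forall z w, z \in Phi (X, P) -> w \in Phi (X, P) -> z != w -> ~~ ovp z w.
    by move=> z w hz hw hzw; move: (H z); rewrite hz /= => /forallP /(_ w); rewrite hw hzw.
  apply/and3P; split.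
  + apply/forallP => x; apply/implyP => hx; apply/forallP => y; apply/implyP => hy.
    apply/implyP => hxy.
    have := H' (place0 x) (place0 y); rewrite !mem_Phi_place0 (inj_eq place0_inj) => /(_ hx hy hxy).
    by [].
  + apply/forallP => p; apply/implyP => hp; apply/negP => /existsP [x /andP [hx hov]].
    have := H' (liftp p) (place0 x); rewrite mem_Phi_liftp mem_Phi_place0 eq_sym place0_liftp Elp.
    by move=> /(_ hp hx isT); rewrite hov.
  + apply/forallP => p; apply/implyP => hp; apply/forallP => q; apply/implyP => hq.
    apply/implyP => hpq.
    have := H' (liftp p) (liftp q); rewrite !mem_Phi_liftp (inj_eq liftp_inj) Ell.
    by move=> /(_ hp hq hpq).
- case/and3P => /forallP H1 /forallP H2 /forallP H3.
  apply/forallP => z; apply/implyP; rewrite /Phi inE => hz.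
  apply/forallP => w; apply/implyP; rewrite /Phi inE => hw.
  case/orP: hz => /imsetP [a ha ->]; case/orP: hw => /imsetP [b hb ->].
  + rewrite (inj_eq place0_inj).
    by move: (H1 a); rewrite ha /= => /forallP /(_ b); rewrite hb.
  + rewrite place0_liftp /= Epl; move: (H2 b); rewrite hb /=; apply: contra => hov.
    by apply/existsP; exists a; rewrite ha.
  + rewrite eq_sym place0_liftp /= Elp; move: (H2 a); rewrite ha /=; apply: contra => hov.
    by apply/existsP; exists b; rewrite hb.
  + rewrite (inj_eq liftp_inj) Ell.
    by move: (H3 a); rewrite ha /= => /forallP /(_ b); rewrite hb.
Qed.

Lemma ok_piX pi X (P : {set Pl n}) :
  [forall p in P, okp (piX pi X) p] =
  [forall p in P, fitp n p.1.1 p.1.2 p.2 && ~~ hits pi p.1.1 (p.1.2).+1 p.2] &&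
  [forall p in P, ~~ [exists x in X, ovl p.1.1 (p.1.2).+1 p.2 x.1 0 x.2]].
Proof.
rewrite -forall_in_and; apply: eq_forallb => p.
by rewrite /okp hits_piX negb_or andbA.
Qed.

Lemma good_Phi s pi X P : k <= n.+1 ->
  good s pi (Phi (X, P)) =
  (condX pi X && (#|X| <= s)) && good (s - #|X|) (piX pi X) P.
Proof.
move=> hk; rewrite /good /condX card_Phi ok_Phi // pair_Phi ok_piX.
have -> : (#|X| + #|P| == s) = (#|X| <= s) && (#|P| == s - #|X|).
  apply/idP/andP => [/eqP <-|[h /eqP ->]]; first by rewrite leq_addr addKn. by rewrite subnKC.
set a := [forall x in X, okX pi x].
set b := [forall x in X, forall y in X, _].
set c := [forall p in P, _ && _].
set d := [forall p in P, ~~ _].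
set e := [forall p in P, forall q in P, _].
by case: a; case: b; case: c; case: d; case: e; case: (#|X| <= s); case: (#|P| == s - #|X|).
Qed.

End Step.

Lemma F_rec n s pi : k <= n.+1 ->
  F n.+1 s pi = \sum_(X : {set bool * 'I_m} | condX pi X && (#|X| <= s)) F n (s - #|X|) (piX pi X).
Proof.
move=> hk; rewrite /F (reindex (@Phi n)) /=; last exact: onW_bij (@Phi_bij n).
rewrite big_mkcond /=.
rewrite (eq_bigr (fun XP => (good s pi (Phi XP) : nat))); last by move=> XP _; case: ifP.
rewrite -(pair_big predT predT (fun X P => (good s pi (Phi (X, P)) : nat))) /=.
rewrite [RHS]big_mkcond /=; apply: eq_bigr => X _.
rewrite (eq_bigr (fun P => ((condX pi X && (#|X| <= s)) : nat) * (good (s - #|X|) (piX pi X) P : nat))); last first.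
  by move=> P _; rewrite good_Phi // mulnb.
case: ifP => hX /=.
  rewrite [RHS]big_mkcond; apply: eq_bigr => P _; rewrite mul1n; by case: ifP.
by rewrite big1 // => P _; rewrite mul0n.
Qed.

End Kmers.

Section Claim.
Variables k m : nat.
Hypothesis hk : 1 < k.

Lemma F_ext n s pi pi' : (forall a b, pi a b = pi' a b) -> F k m n s pi = F k m n s pi'.
Proof.
move=> E; rewrite /F; apply: eq_bigl => P; rewrite /good; congr andb; congr andb.
apply: eq_forallb => p; by rewrite /okp /hits; under eq_existsb => j do rewrite E.
Qed.

Lemma F0 n pi : F k m n 0 pi = 1.
Proof.
rewrite /F (big_pred1 set0) // => P /=; rewrite /good cards_eq0.
apply/andP/eqP => [[/eqP -> _] // | ->]; split => //.
by apply/andP; split; apply/forallP => p; rewrite in_set0.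
Qed.

Lemma piX_bound (pi : nat -> nat -> bool) (X : {set bool * 'I_m}) a b h : (forall a b, pi a b -> a < h) ->
  piX k pi X a b -> (a.+1 < h) || (a.+1 < k).
Proof.
move=> H /orP [/H -> //|/existsP [x /andP [_ /existsP [j /eqP]]]].
rewrite /cellp; case: x.1 => // -[<- _]; by rewrite ltn_ord orbT.
Qed.

Lemma claim1D s : forall h (pi : nat -> nat -> bool) n, (forall a b, pi a b -> a < h) ->
  k * s + h + 1 <= n -> Dg s.+1 (fun i => (Posz (F k m (n - i) s pi))) = 0%R.
Proof.
elim/ltn_ind: s => s IHs.
case: s IHs => [|s] IHs.
  move=> h pi n _ _; rewrite DgS; apply: Dg_zero => i _; by rewrite !F0 GRing.subrr.
elim=> [|h IHh] pi n hpi hn.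
- rewrite DgS.
  rewrite (Dg_ext _ _ (fun i => \sum_(X : {set bool * 'I_m} | (condX k pi X && (#|X| <= s.+1)%N) && (X != set0))
              (Posz (F k m (n.-1 - i)%N (s.+1 - #|X|)%N (piX k pi X))))%R); last first.
    move=> i hi.
    rewrite (_ : (n - i = (n.-1 - i).+1)%N); last by nia.
    rewrite (_ : (n - i.+1 = n.-1 - i)%N); last by lia.
    rewrite F_rec; last by nia.
    rewrite (bigD1 set0) /=; last first.
      rewrite cards0 andbT /condX; apply/andP; split; apply/forallP => x; by rewrite in_set0.
    rewrite cards0 subn0 (@F_ext _ _ (piX k pi set0) pi); last first.
      move=> a b; rewrite /piX; case: (boolP (pi a b)) => [/hpi //|_].
      case: (boolP (pi a.+1 b)) => [/hpi //|_] /=.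
      by apply/negbTE/negP => /existsP [x]; rewrite in_set0.
    rewrite PoszD GRing.addrAC GRing.subrr GRing.add0r.
    by rewrite (big_morph Posz PoszD (erefl _)).
  rewrite Dg_sum big1 // => X /andP [/andP [hc hs] hne].
  have hX : 0 < #|X| by rewrite card_gt0.
  set s' := (s.+1 - #|X|)%N.
  have hs' : (s' < s.+1)%N by rewrite /s'; lia.
  have H := IHs s' hs' k.-1 (piX k pi X).
  have H' : forall y, (k * s' + k.-1 + 1 <= y)%N ->
      Dg s'.+1 (fun i => (Posz (F k m (y - i) s' (piX k pi X)))) = 0%R.
    move=> y hy; apply: H => // a b /(piX_bound hpi) /orP [] //; lia.
  have := Dg_lift (fun y => Posz (F k m y s' (piX k pi X))) _ _ H' (s.+1 - s'.+1) (n.-1).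
  rewrite (_ : (s'.+1 + (s.+1 - s'.+1) = s.+1)%N); last by lia.
  apply; rewrite /s' in hs' *; nia.
- rewrite (Dg_ext _ _ (fun i => \sum_(X : {set bool * 'I_m} | condX k pi X && (#|X| <= s.+1)%N)
              (Posz (F k m (n.-1 - i)%N (s.+1 - #|X|)%N (piX k pi X))))%R); last first.
    move=> i hi.
    rewrite (_ : (n - i = (n.-1 - i).+1)%N); last by nia.
    rewrite F_rec; last by nia.
    by rewrite (big_morph Posz PoszD (erefl _)).
  rewrite Dg_sum big1 // => X /andP [hc hs].
  case: (eqVneq X set0) => [->|hne].
    rewrite cards0 subn0; apply: IHh; last by lia.
    move=> a b; rewrite /piX => /orP [/hpi|/existsP [x]]; last by rewrite in_set0.
    by rewrite ltnS.
  have hX : 0 < #|X| by rewrite card_gt0.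
  set s' := (s.+1 - #|X|)%N.
  have hs' : (s' < s.+1)%N by rewrite /s'; lia.
  have H := IHs s' hs' (h + k.-1) (piX k pi X).
  have H' : forall y, (k * s' + (h + k.-1) + 1 <= y)%N ->
      Dg s'.+1 (fun i => (Posz (F k m (y - i) s' (piX k pi X)))) = 0%R.
    move=> y hy; apply: H => // a b /(piX_bound hpi) /orP [] ?; lia.
  have := Dg_lift (fun y => Posz (F k m y s' (piX k pi X))) _ _ H' (s.+2 - s'.+1) (n.-1).
  rewrite (_ : (s'.+1 + (s.+2 - s'.+1) = s.+2)%N); last by lia.
  apply; rewrite /s' in hs' *; nia.
Qed.
End Claim.

Lemma forall_imset (aT rT : finType) (f : aT -> rT) (D : {set aT}) (Q : pred rT) :
  [forall z in f @: D, Q z] = [forall x in D, Q (f x)].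
Proof.
apply/forallP/forallP => H x; apply/implyP => hx.
  by apply: (implyP (H (f x))); exact: imset_f.
by case/imsetP: hx => y hy ->; exact: (implyP (H y)).
Qed.

Lemma ndisjP (T : finType) (A B : {set T}) :
  reflect (exists x, x \in A /\ x \in B) (~~ [disjoint A & B]).
Proof.
rewrite -setI_eq0; apply: (iffP (set0Pn _)) => -[x].
  by rewrite inE => /andP [? ?]; exists x.
by case=> ? ?; exists x; rewrite inE; apply/andP.
Qed.

Definition pi0 : nat -> nat -> bool := fun _ _ => false.

Lemma hits_pi0 k o r c : hits k pi0 o r c = false.
Proof. by apply/existsP => -[]. Qed.

Section Transp.
Variables k m n : nat.
Definition trp (p : Pl m n) : Pl n m := (~~ p.1.1, p.2, p.1.2).
Definition trp' (q : Pl n m) : Pl m n := (~~ q.1.1, q.2, q.1.2).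

Lemma trpK : cancel trp' trp.
Proof. by move=> [[o r] c]; rewrite /trp /trp' /= negbK. Qed.
Lemma trpK' : cancel trp trp'.
Proof. by move=> [[o r] c]; rewrite /trp /trp' /= negbK. Qed.

Lemma cellp_tr o r c j : cellp (~~ o) c r j = ((cellp o r c j).2, (cellp o r c j).1).
Proof. by case: o. Qed.

Lemma ovl_tr o1 r1 c1 o2 r2 c2 :
  ovl k (~~ o1) c1 r1 (~~ o2) c2 r2 = ovl k o1 r1 c1 o2 r2 c2.
Proof.
rewrite /ovl; apply: eq_existsb => j1; apply: eq_existsb => j2.
rewrite !cellp_tr !xpair_eqE andbC.
by case: (cellp o1 r1 c1 j1) => a b; case: (cellp o2 r2 c2 j2).
Qed.

Lemma good_tr s (Q : {set Pl n m}) : good k s pi0 (trp' @: Q) = good k s pi0 Q.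
Proof.
have inj : injective trp' by exact: can_inj trpK.
rewrite /good card_imset // !forall_imset; congr andb; congr andb.
  apply: eq_forallb => q; rewrite /okp !hits_pi0 /fitp /=.
  by case: q => [[[] r] c].
apply: eq_forallb => q; rewrite forall_imset; congr implb.
apply: eq_forallb => q'; rewrite (inj_eq inj) /ovp /=.
by rewrite ovl_tr.
Qed.

Lemma F_tr s : F k m n s pi0 = F k n m s pi0.
Proof.
rewrite /F (reindex (fun Q : {set Pl n m} => trp' @: Q)) /=.
  by apply: eq_bigl => Q; rewrite good_tr.
apply: onW_bij; exists (fun P : {set Pl m n} => trp @: P) => P.
  rewrite -imset_comp (@eq_imset _ _ (trp \o trp') id) ?imset_id // => x; exact: trpK.
rewrite -imset_comp (@eq_imset _ _ (trp' \o trp) id) ?imset_id // => x; exact: trpK'.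
Qed.
End Transp.

Section Link.
Variables k n m : nat.
Hypothesis hk : 1 < k.

Definition cellset (p : Pl m n) : {set site n m} :=
  [set z : site n m | [exists j : 'I_k,
     cellp p.1.1 p.1.2 p.2 j == (nat_of_ord z.1, nat_of_ord z.2)]].

Definition fitq (p : Pl m n) := fitp k m n p.1.1 p.1.2 p.2.

Lemma mem_cellset p z : (z \in cellset p) =
  (if p.1.1 then (val z.1 == p.1.2 :> nat) && (p.2 <= z.2 < p.2 + k)
   else (val z.2 == p.2 :> nat) && (p.1.2 <= z.1 < p.1.2 + k)).
Proof.
case: p => [[o r] c]; case: z => [x y]; rewrite inE /=.
case: o => /=; apply/existsP/andP.
- case=> j /eqP [E1 E2]; split; first by rewrite E1.
  have := ltn_ord j; lia.
- case=> /eqP E1 h.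
  have hj : y - c < k by lia.
  exists (Ordinal hj); apply/eqP; rewrite /= E1; congr pair; lia.
- case=> j /eqP [E1 E2]; split; first by rewrite E2.
  have := ltn_ord j; lia.
- case=> /eqP E1 h.
  have hj : x - r < k by lia.
  exists (Ordinal hj); apply/eqP; rewrite /= E1; congr pair; lia.
Qed.

Lemma fit_in p j : fitq p -> j < k ->
  ((cellp p.1.1 p.1.2 p.2 j).1 < n) && ((cellp p.1.1 p.1.2 p.2 j).2 < m).
Proof.
case: p => [[o r] c]; rewrite /fitq /fitp /=.
have := ltn_ord r; have := ltn_ord c; case: o => /= ? ? ? ?; apply/andP; split; lia.
Qed.

Lemma cellset_inj p q : fitq p -> fitq q -> cellset p = cellset q -> p = q.
Proof.
case: p => [[o r] c]; case: q => [[o' r'] c']; rewrite /fitq /fitp /= => fp fq E.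
have h0 : (r, c) \in cellset (o', r', c') by rewrite -E mem_cellset /=; case: (o) => /=; rewrite eqxx /=; lia.
have h0' : (r', c') \in cellset (o, r, c) by rewrite E mem_cellset /=; case: (o') => /=; rewrite eqxx /=; lia.
rewrite !mem_cellset /= in h0 h0'.
have [Er Ec] : (r = r' :> nat) /\ (c = c' :> nat).
  by move: h0 h0'; case: (o); case: (o') => /= /andP [/eqP ? ?] /andP [/eqP ? ?]; lia.
have Eo : o = o'.
  case: o o' fp fq E {h0 h0'} => [] [] // fp fq E.
  - have hc1 : c.+1 < m by lia.
    have : (r, Ordinal hc1) \in cellset (true, r, c) by rewrite mem_cellset /= eqxx /=; lia.
    by rewrite E mem_cellset /= => /andP [/eqP ? _]; lia.
  - have hr1 : r.+1 < n by lia.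
    have : (Ordinal hr1, c) \in cellset (false, r, c) by rewrite mem_cellset /= eqxx /=; lia.
    by rewrite E mem_cellset /= => /andP [/eqP ? _]; lia.
by rewrite Eo (val_inj Er) (val_inj Ec).
Qed.

Lemma cellset_kmer p : fitq p -> is_kmer k (cellset p).
Proof.
case: p => [[[] r] c]; rewrite /fitq /fitp /= => fp; rewrite /is_kmer; apply/orP.
  left; apply/existsP; exists r; apply/existsP; exists c; rewrite fp /=.
  by apply/eqP/setP => z; rewrite mem_cellset inE.
right; apply/existsP; exists r; apply/existsP; exists c; rewrite fp /=.
by apply/eqP/setP => z; rewrite mem_cellset inE.
Qed.

Lemma kmer_cellset A : is_kmer k A -> exists p, fitq p && (cellset p == A).
Proof.
case/orP => /existsP [r /existsP [c /andP [h /eqP ->]]].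
  exists (true, r, c); rewrite /fitq /fitp /= h /=.
  by apply/eqP/setP => z; rewrite mem_cellset inE.
exists (false, r, c); rewrite /fitq /fitp /= h /=.
by apply/eqP/setP => z; rewrite mem_cellset inE.
Qed.

Lemma ovl_cellset p q : fitq p -> fitq q ->
  ovp k p q = ~~ [disjoint cellset p & cellset q].
Proof.
move=> fp fq; rewrite /ovp; apply/idP/ndisjP.
- case/existsP => j1 /existsP [j2 /eqP E].
  case/andP: (fit_in fp (ltn_ord j1)) => h1 h2.
  exists (Ordinal h1, Ordinal h2); split; rewrite inE; apply/existsP.
    by exists j1; apply/eqP; exact: surjective_pairing.
  by exists j2; rewrite -E; apply/eqP; exact: surjective_pairing.
- case=> z []; rewrite !inE => /existsP [j1 /eqP E1] /existsP [j2 /eqP E2].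
  by apply/existsP; exists j1; apply/existsP; exists j2; rewrite E1 E2.
Qed.

Lemma okp_pi0 (p : Pl m n) : okp k pi0 p = fitq p.
Proof. by rewrite /okp hits_pi0 andbT. Qed.

Lemma link s : num_configs k s n m = F k m n s pi0.
Proof.
rewrite /num_configs /F sum1dep_card.
set G := [set P : {set Pl m n} | good k s pi0 P].
have fitG : forall P p, P \in G -> p \in P -> fitq p.
  move=> P p; rewrite inE => /and3P [_ /forallP H _] hp.
  by move: (H p); rewrite hp okp_pi0.
have Ginj : {in G &, injective (fun P : {set Pl m n} => cellset @: P)}.
  move=> P1 P2 h1 h2 /= E.
  apply/setP => p; apply/idP/idP => hp.
    have : cellset p \in cellset @: P2 by rewrite -E; exact: imset_f.
    case/imsetP => q hq Eq.
    by rewrite (cellset_inj (fitG _ _ h1 hp) (fitG _ _ h2 hq) Eq).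
  have : cellset p \in cellset @: P1 by rewrite E; exact: imset_f.
  case/imsetP => q hq Eq.
  by rewrite (cellset_inj (fitG _ _ h2 hp) (fitG _ _ h1 hq) Eq).
rewrite -(card_in_imset Ginj); apply: eq_card => Q; rewrite [in LHS]inE.
apply/idP/imsetP.
- case/and3P => /forallP hk' /eqP hc /forallP hd.
  set P := [set p : Pl m n | fitq p && (cellset p \in Q)].
  have EQ : cellset @: P = Q.
    apply/setP => A; apply/imsetP/idP => [[p hp ->]|hA].
      by rewrite inE in hp; case/andP: hp.
    have [p /andP [fp /eqP Ep]] := kmer_cellset (implyP (hk' A) hA).
    by exists p; rewrite // inE fp Ep.
  have injP : {in P &, injective cellset}.
    move=> p q; rewrite !inE => /andP [fp _] /andP [fq _]; exact: cellset_inj.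
  exists P; last by rewrite EQ.
  rewrite inE /good; apply/and3P; split.
  + by rewrite -(card_in_imset injP) EQ hc.
  + apply/forallP => p; apply/implyP; rewrite inE okp_pi0 => /andP [fp _]; exact: fp.
  + apply/forallP => p; apply/implyP => hp; apply/forallP => q; apply/implyP => hq.
    apply/implyP => hpq.
    move: hp hq; rewrite !inE => /andP [fp hp] /andP [fq hq].
    rewrite (ovl_cellset fp fq) negbK.
    have hne : cellset p != cellset q.
      by apply: contra hpq => /eqP E; apply/eqP; exact: cellset_inj.
    by move: (hd (cellset p)); rewrite hp /= => /forallP /(_ (cellset q)); rewrite hq hne.
- case=> P hP ->.
  have hP' := hP; rewrite inE in hP'; case/and3P: hP' => /eqP hc _ /forallP hd.
  have injP : {in P &, injective cellset}.
    move=> p q hp hq; exact: cellset_inj (fitG _ _ hP hp) (fitG _ _ hP hq).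
  rewrite /is_config; apply/and3P; split.
  + apply/forallP => A; apply/implyP => /imsetP [p hp ->].
    exact: cellset_kmer (fitG _ _ hP hp).
  + by rewrite card_in_imset // hc.
  + apply/forallP => A; apply/implyP => /imsetP [p hp ->].
    apply/forallP => B; apply/implyP => /imsetP [q hq ->].
    apply/implyP => hne.
    have hpq : p != q by apply: contra hne => /eqP ->.
    move: (hd p); rewrite hp /= => /forallP /(_ q); rewrite hq hpq /=.
    by rewrite (ovl_cellset (fitG _ _ hP hp) (fitG _ _ hP hq)) negbK.
Qed.
End Link.

Local Open Scope ring_scope.

Theorem corollary1 (k s n m : nat) (hk : (2 <= k)%N)
  (hn : ((k.+1) * s + 1 <= n)%N) (hm : ((k.+1) * s + 1 <= m)%N) :
  \sum_(i < (2 * s + 1).+1)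
     (-1) ^+ i * ('C(2 * s + 1, i))%:Z * (num_configs k s (n - i) (m - i))%:Z = 0 :> int.
Proof.
pose f := fun x y => Posz (num_configs k s x y).
have := @diagZ s.+1 s.+1 f (k * s - s)%N.
rewrite (_ : ((s.+1 + s.+1).-1 = 2 * s + 1)%N); last by lia.
apply; last 2 first.
- nia.
- nia.
- move=> m' n' hn'; rewrite /f.
  rewrite (Dg_ext _ _ (fun i => Posz (F k m' (n' - i)%N s pi0))); last first.
    by move=> i _; rewrite link.
  apply: (@claim1D k m' hk s 0); [by [] | nia].
- move=> n' m' hm'; rewrite /f.
  rewrite (Dg_ext _ _ (fun i => Posz (F k n' (m' - i)%N s pi0))); last first.
    by move=> i _; rewrite link // F_tr.
  apply: (@claim1D k n' hk s 0); [by [] | nia].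
Qed.
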